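(* Let $P$ and $Q$ be distinct planes in $\mathbb{H}^4$ intersecting in a line. Then $H_PH_Q$ is a type-I elliptic isometry whose twisting plane is orthogonal to the hyperplane containing $P\cup Q$ through $P\cap Q$.
   Context: A plane is a $2$-dimensional totally geodesic subspace of $\mathbb{H}^4$. For a plane $P$, the half-turn $H_P$ is the composition of reflections in two orthogonal hyperplanes intersecting in $P$. A type-I elliptic isometry is a composition of reflections in two distinct hyperplanes intersecting in a plane; its fixed-point set, a plane, is called its twisting plane. *)

(* Defs.v *)
(* hyperboloid model of H^4 inside R^{4,1}. *)
From HB Require Import structures.
From mathcomp Require Import all_boot all_order all_algebra.
Set Implicit Arguments. Unset Strict Implicit. Unset Printing Implicit Defensive.
Import Order.TTheory GRing.Theory Num.Theory.
Local Open Scope ring_scope.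

Section H4.
Variable R : realFieldType.

(* Vectors of R^5 = R^{4,1}; coordinates 0..3 spacelike, coordinate 4 timelike. *)
Definition vec := 'rV[R]_5.

Definition minkJ : 'M[R]_5 :=
  diag_mx (\row_(i < 5) (if i == ord_max then -1 else 1)).

Definition mink (x y : vec) : R := (x *m minkJ *m y^T) 0 0.

Definition hyp (x : vec) : Prop := mink x x = -1 /\ 0 < x 0 ord_max.

Definition hset := vec -> Prop.

Definition seteq (A B : hset) : Prop := forall x, A x <-> B x.
Definition hsubs (A B : hset) : Prop := forall x, A x -> B x.
Definition hinter (A B : hset) : hset := fun x => A x /\ B x.

(* k-dimensional totally geodesic subspace of H^4: nonempty intersection of
   H^4 with a (k+1)-dimensional linear subspace of R^{4,1}. *)
Definition tg_subspace (k : nat) (A : hset) : Prop :=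
  exists V : 'M[R]_5, \rank V = k.+1 /\ (exists x, hyp x /\ (x <= V)%MS) /\
    seteq A (fun x => hyp x /\ (x <= V)%MS).

Definition is_line := tg_subspace 1.
Definition is_plane := tg_subspace 2.
Definition is_hyperplane := tg_subspace 3.

Definition normal_of (n : vec) (H : hset) : Prop :=
  0 < mink n n /\ seteq H (fun x => hyp x /\ mink x n = 0).

Definition hrefl (n x : vec) : vec := x - ((2 * mink x n) / mink n n) *: n.

Definition is_half_turn (P : hset) (h : vec -> vec) : Prop :=
  exists (H1 H2 : hset) (n1 n2 : vec),
    normal_of n1 H1 /\ normal_of n2 H2 /\ mink n1 n2 = 0 /\
    seteq (hinter H1 H2) P /\ forall x, h x = hrefl n1 (hrefl n2 x).

Definition type_I_elliptic (f : vec -> vec) : Prop :=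
  exists (H1 H2 : hset) (n1 n2 : vec),
    normal_of n1 H1 /\ normal_of n2 H2 /\ ~ seteq H1 H2 /\
    is_plane (hinter H1 H2) /\ forall x, hyp x -> f x = hrefl n1 (hrefl n2 x).

Definition fixpts (f : vec -> vec) : hset := fun x => hyp x /\ f x = x.

Definition plane_orth_hyperplane (T S : hset) : Prop :=
  exists (V : 'M[R]_5) (n : vec), \rank V = 3 /\
    seteq T (fun x => hyp x /\ (x <= V)%MS) /\ normal_of n S /\ (n <= V)%MS.

End H4.

(* Main.v *)
Require Import Defs.
From mathcomp Require Import all_boot all_order all_algebra.
From mathcomp Require Import ring lra.
Set Implicit Arguments. Unset Strict Implicit. Unset Printing Implicit Defensive.
Import Order.TTheory GRing.Theory Num.Theory.
Local Open Scope ring_scope.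

Section Aux.
Variable R : rcfType.
Local Notation vec := (vec R).
Local Notation J := (minkJ R).

Lemma trJ : J^T = J.
Proof. by rewrite /minkJ tr_diag_mx. Qed.

Lemma JJ : J *m J = 1%:M.
Proof.
rewrite /minkJ mulmx_diag; apply/matrixP => i j; rewrite !mxE.
case: (i == j); last by [].
by case: (_ == ord_max); rewrite ?mulrNN mulr1.
Qed.

Lemma rowfreeJ : row_free J.
Proof.
rewrite /row_free; apply/eqP; apply/anti_leq; rewrite rank_leq_row /=.
by rewrite -{1}(mxrank1 R 5) -JJ mxrankM_maxl.
Qed.

Lemma minkE (x y : vec) :
  mink x y = \sum_(i < 5) x 0 i * y 0 i * (if i == ord_max then -1 else 1).
Proof.
rewrite /mink /minkJ mxE; apply: eq_bigr => i _.
rewrite !mxE (bigD1 i) //= big1 ?addr0; last first.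
  by move=> j /negbTE ji; rewrite !mxE eq_sym ji mulr0n !(mulr0, mul0r).
by rewrite !mxE eqxx mulr1n mulrAC.
Qed.

Lemma minkC (x y : vec) : mink x y = mink y x.
Proof. by rewrite !minkE; apply: eq_bigr => i _; rewrite (mulrC (x 0 i)). Qed.

Lemma minkDl (x y z : vec) : mink (x + y) z = mink x z + mink y z.
Proof. by rewrite /mink !mulmxDl mxE. Qed.

Lemma minkZl (k : R) (x z : vec) : mink (k *: x) z = k * mink x z.
Proof. by rewrite /mink -!scalemxAl mxE. Qed.

Lemma minkNl (x z : vec) : mink (- x) z = - mink x z.
Proof. by rewrite -scaleN1r minkZl mulN1r. Qed.

Lemma minkBl (x y z : vec) : mink (x - y) z = mink x z - mink y z.
Proof. by rewrite minkDl minkNl. Qed.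

Lemma minkDr (x y z : vec) : mink z (x + y) = mink z x + mink z y.
Proof. by rewrite minkC minkDl !(minkC z). Qed.
Lemma minkZr (k : R) (x z : vec) : mink z (k *: x) = k * mink z x.
Proof. by rewrite minkC minkZl minkC. Qed.
Lemma minkNr (x z : vec) : mink z (- x) = - mink z x.
Proof. by rewrite minkC minkNl minkC. Qed.
Lemma minkBr (x y z : vec) : mink z (x - y) = mink z x - mink z y.
Proof. by rewrite minkDr minkNr. Qed.
Lemma mink0l (z : vec) : mink 0 z = 0.
Proof. by rewrite -(scale0r 0) minkZl mul0r. Qed.
Lemma mink0r (z : vec) : mink z 0 = 0.
Proof. by rewrite minkC mink0l. Qed.

Definition minkE' := (minkDl, minkZl, minkNl, minkDr, minkZr, minkNr, mink0l, mink0r).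

Definition i0 : 'I_5 := ord0.
Definition i1 : 'I_5 := lift ord0 ord0.
Definition i2 : 'I_5 := lift ord0 (lift ord0 ord0).
Definition i3 : 'I_5 := lift ord0 (lift ord0 (lift ord0 ord0)).
Definition i4 : 'I_5 := lift ord0 (lift ord0 (lift ord0 (lift ord0 ord0))).

Lemma i4E : (ord_max : 'I_5) = i4.
Proof. by apply/val_inj. Qed.

Lemma mink5 (x y : vec) : mink x y =
  x 0 i0 * y 0 i0 + x 0 i1 * y 0 i1 + x 0 i2 * y 0 i2 + x 0 i3 * y 0 i3 - x 0 i4 * y 0 i4.
Proof.
rewrite minkE !big_ord_recl big_ord0 /= !mulr1 mulrN1 addr0 !addrA //.
Qed.

Lemma all_ord5 (P : 'I_5 -> Prop) : P i0 -> P i1 -> P i2 -> P i3 -> P i4 -> forall i, P i.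
Proof.
move=> h0 h1 h2 h3 h4 [[|[|[|[|[|k]]]]] Hk].
- by have -> : Ordinal Hk = i0 by apply/val_inj.
- by have -> : Ordinal Hk = i1 by apply/val_inj.
- by have -> : Ordinal Hk = i2 by apply/val_inj.
- by have -> : Ordinal Hk = i3 by apply/val_inj.
- by have -> : Ordinal Hk = i4 by apply/val_inj.
- by [].
Qed.

Lemma timelike4 (y : vec) : mink y y < 0 -> y 0 ord_max != 0.
Proof.
rewrite mink5 i4E => H; apply/eqP => h; rewrite h in H.
have : 0 <= y 0 i0 * y 0 i0 + y 0 i1 * y 0 i1 + y 0 i2 * y 0 i2 + y 0 i3 * y 0 i3.
  by rewrite !addr_ge0 // -expr2 sqr_ge0.
nra.
Qed.

Lemma coordK2 (a0 a1 a2 a3 t b0 b1 b2 b3 s : R) :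
  a0*a0+a1*a1+a2*a2+a3*a3 - t*t < 0 ->
  a0*b0+a1*b1+a2*b2+a3*b3 - t*s = 0 ->
  b0*b0+b1*b1+b2*b2+b3*b3 - s*s <= 0 -> s = 0 /\ b0*b0+b1*b1+b2*b2+b3*b3 <= 0.
Proof.
move=> H1 H2 H3.
have W : 0 <= (t*b0 - s*a0)^+2 + (t*b1 - s*a1)^+2 + (t*b2 - s*a2)^+2 + (t*b3 - s*a3)^+2.
  by rewrite !addr_ge0 ?sqr_ge0.
have E : (t*b0 - s*a0)^+2 + (t*b1 - s*a1)^+2 + (t*b2 - s*a2)^+2 + (t*b3 - s*a3)^+2 =
   t*t*(b0*b0+b1*b1+b2*b2+b3*b3) - 2*t*s*(a0*b0+a1*b1+a2*b2+a3*b3) + s*s*(a0*a0+a1*a1+a2*a2+a3*a3) by ring.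
rewrite E in W.
move: W H1 H2 H3.
set A := a0*a0+a1*a1+a2*a2+a3*a3; set B := b0*b0+b1*b1+b2*b2+b3*b3; set D := a0*b0+a1*b1+a2*b2+a3*b3.
move=> W H1 H2 H3.
have hD : D = t * s by lra.
rewrite hD in W.
have h4 : t*t*B <= t*t*(s*s) by apply: ler_wpM2l; [nra| lra].
have h5 : 0 <= s*s*(A - t*t) by nra.
have s0 : s * s <= 0.
  have : 0 <= s * s by nra.
  nra.
have -> : s = 0 by nra.
split => //; nra.
Qed.

Lemma nondeg (x p : vec) : mink x x < 0 -> mink p x = 0 -> mink p p <= 0 -> p = 0.
Proof.
rewrite !mink5 => H1; rewrite (mulrC (p 0 i0)) (mulrC (p 0 i1)) (mulrC (p 0 i2)) (mulrC (p 0 i3)) (mulrC (p 0 i4)) => H2 H3.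
have [s0 hb] := coordK2 H1 H2 H3.
have q : forall c : R, c * c <= 0 -> c = 0.
  by move=> c hc; apply/eqP; rewrite -sqrf_eq0 eq_le expr2 hc /= -expr2 sqr_ge0.
have hb0 : p 0 i0 = 0 /\ p 0 i1 = 0 /\ p 0 i2 = 0 /\ p 0 i3 = 0.
  by split; [|split; [|split]]; apply: q; nra.
apply/rowP; apply: all_ord5; rewrite !mxE; by case: hb0 => [?[?[??]]].
Qed.

Definition perp m (A : 'M[R]_(m,5)) : 'M[R]_5 := kermx ((A *m J)^T).

Lemma perp_mul m (A : 'M[R]_(m,5)) (x : vec) : x *m (A *m J)^T = x *m J *m A^T.
Proof. by rewrite trmx_mul trJ mulmxA. Qed.

Lemma perpP m (A : 'M[R]_(m,5)) (x : vec) :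
  (x <= perp A)%MS <-> forall y : vec, (y <= A)%MS -> mink x y = 0.
Proof.
rewrite /perp sub_kermx perp_mul; split.
  move=> /eqP h y /submxP [D ->]; rewrite /mink trmx_mul mulmxA h mul0mx mxE //.
move=> h; apply/eqP/rowP => j.
have -> : (x *m J *m A^T) 0 j = (x *m J *m col j A^T) 0 0.
  by rewrite !mxE; apply: eq_bigr => k _; rewrite !mxE.
by rewrite -tr_row -/(mink x (row j A)) h ?row_sub // mxE.
Qed.

Lemma rank_perp m (A : 'M[R]_(m,5)) : \rank (perp A) = (5 - \rank A)%N.
Proof. by rewrite /perp mxrank_ker mxrank_tr mxrankMfree // rowfreeJ. Qed.

Lemma perp_sym m (A : 'M[R]_(m,5)) (x y : vec) :
  (x <= perp A)%MS -> (y <= A)%MS -> mink y x = 0.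
Proof. by move=> /perpP h hy; rewrite minkC h. Qed.

Lemma sub_line (u y : vec) : (y <= u)%MS -> exists k, y = k *: u.
Proof.
move=> /submxP [D ->]; exists (D 0 0).
by rewrite {1}(mx11_scalar D) mul_scalar_mx.
Qed.

Lemma timelike_sub m1 m2 (A : 'M[R]_(m1,5)) (B : 'M[R]_(m2,5)) :
  (forall x, hyp x -> (x <= A)%MS -> (x <= B)%MS) ->
  forall y : vec, (y <= A)%MS -> mink y y < 0 -> (y <= B)%MS.
Proof.
move=> h y yA yt.
have y4 := timelike4 yt.
set k := Num.sqrt (- mink y y).
have kp : 0 < k by rewrite sqrtr_gt0 oppr_gt0.
have k2 : k * k = - mink y y by rewrite -expr2 sqr_sqrtr // oppr_ge0 ltW.
set e : R := if 0 < y 0 ord_max then 1 else -1.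
have e2 : e * e = 1 by rewrite /e; case: ifP => _; [rewrite mulr1 | rewrite mulrNN mulr1].
have ey : 0 < e * y 0 ord_max.
  rewrite /e; case: ifP => hh; rewrite ?mul1r // mulN1r oppr_gt0.
  by rewrite lt_neqAle y4 /= leNgt hh.
have kn : k != 0 by rewrite gt_eqF.
set z := (e / k) *: y.
have hz : hyp z.
  split.
    rewrite /z minkZl minkZr mulrA.
    have -> : mink y y = - (k * k) by rewrite k2 opprK.
    rewrite mulrN -mulrA [X in _ * X]mulrC mulrA.
    have -> : e / k * (e / k) * (k * k) = e * e by field.
    by rewrite e2.
  rewrite /z mxE mulrAC divr_gt0 //.
have zB : (z <= B)%MS by apply: h => //; rewrite /z scalemx_sub.
have -> : y = (k / e) *: z.
  have en : e != 0 by apply/eqP => e0; move: e2; rewrite e0 mul0r => /eqP; rewrite eq_sym oner_eq0.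
  by rewrite /z scalerA -[LHS]scale1r; congr (_ *: _); field; apply/andP.
by rewrite scalemx_sub.
Qed.

Lemma hyp_span m1 m2 (A : 'M[R]_(m1,5)) (B : 'M[R]_(m2,5)) :
  (exists x, hyp x /\ (x <= A)%MS) ->
  (forall x, hyp x -> (x <= A)%MS -> (x <= B)%MS) -> (A <= B)%MS.
Proof.
move=> [x0 [[hx0 _] x0A]] h; apply/rV_subP => v vA.
have tl := timelike_sub h.
have x0B : (x0 <= B)%MS by apply: tl => //; rewrite hx0 ltrN10.
set c := mink v v.
have cp : 0 < 1 + `|c| by rewrite ltr_pwDl ?normr_ge0.
set w := (1 + `|c|)^-1 *: v.
have wA : (w <= A)%MS by rewrite scalemx_sub.
have ww : mink w w < 1.
  rewrite /w minkZl minkZr -/c mulrA -expr2.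
  have hc : c <= `|c| by apply: ler_norm.
  have : `|c| < (1 + `|c|) ^+ 2.
    rewrite expr2 mulrDl mul1r mulrDr mulr1.
    have := normr_ge0 c; nra.
  move=> hl; rewrite exprVn ltr_pdivrMl ?exprn_gt0 // mulr1.
  exact: le_lt_trans hc hl.
have sum : mink (x0 + w) (x0 + w) + mink (x0 - w) (x0 - w) = 2 * mink x0 x0 + 2 * mink w w.
  rewrite !(minkDl, minkDr, minkBl, minkBr) (minkC w x0) !(minkNl, minkNr) opprK (minkC w x0); ring.
have v_eq : v = (1 + `|c|) *: w by rewrite /w scalerA mulfV ?gt_eqF // scale1r.
have [hp | hm] : mink (x0 + w) (x0 + w) < 0 \/ mink (x0 - w) (x0 - w) < 0.
- case: (ltP (mink (x0 + w) (x0 + w)) 0) => hh; [by left|right].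
  rewrite hx0 in sum; have := ww; lra.
- have : ((x0 + w)%R <= B)%MS by apply: tl => //; rewrite addmx_sub.
  move=> hB; rewrite v_eq scalemx_sub //.
  have -> : w = (x0 + w) - x0 by rewrite addrC addKr.
  by rewrite addmx_sub // -scaleN1r scalemx_sub.
- have : ((x0 - w)%R <= B)%MS by apply: tl => //; rewrite addmx_sub // -scaleN1r scalemx_sub.
  move=> hB; rewrite v_eq scalemx_sub //.
  have -> : w = x0 - (x0 - w) by rewrite opprB addrC subrK.
  by rewrite addmx_sub // -scaleN1r scalemx_sub.
Qed.


Lemma rank_sub_eq m1 m2 (A : 'M[R]_(m1,5)) (B : 'M[R]_(m2,5)) :
  (A <= B)%MS -> \rank B = \rank A -> (B <= A)%MS.
Proof. by move=> h e; rewrite -(mxrank_leqif_sup h).2 e. Qed.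

Lemma perp1 (u x : vec) : (x <= perp u)%MS <-> mink x u = 0.
Proof.
rewrite perpP; split; first by apply; rewrite submx_refl.
by move=> h y /sub_line [k ->]; rewrite minkZr h mulr0.
Qed.

Lemma rank_perp1 (u : vec) : u != 0 -> \rank (perp u) = 4%N.
Proof. by move=> h; rewrite rank_perp rank_rV h. Qed.

Lemma hrefl_orth (n x : vec) : mink x n = 0 -> hrefl n x = x.
Proof. by move=> h; rewrite /hrefl h mulr0 mul0r scale0r subr0. Qed.

Lemma refl2E (n m x : vec) : mink n m = 0 ->
  hrefl n (hrefl m x) = x - (2 * mink x m / mink m m) *: m - (2 * mink x n / mink n n) *: n.
Proof.
move=> h; rewrite /hrefl; congr (_ - (_ *: _)).
by rewrite minkBl minkZl (minkC m n) h mulr0 subr0.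
Qed.

Lemma refl_comm (n m x : vec) : mink n m = 0 -> hrefl n (hrefl m x) = hrefl m (hrefl n x).
Proof.
move=> h; have h' : mink m n = 0 by rewrite minkC.
by rewrite (refl2E x h) (refl2E x h') addrAC.
Qed.

Lemma refl_inv (n x : vec) : mink n n != 0 -> hrefl n (hrefl n x) = x.
Proof.
move=> h; rewrite {1}/hrefl minkBl minkZl /hrefl.
have -> : 2 * (mink x n - 2 * mink x n / mink n n * mink n n) / mink n n = - (2 * mink x n / mink n n).
  by field.
by rewrite scaleNr opprK subrK.
Qed.

Definition proj2 (n1 n2 x : vec) : vec :=
  (mink x n1 / mink n1 n1) *: n1 + (mink x n2 / mink n2 n2) *: n2.

Lemma refl2_proj (n1 n2 x : vec) : mink n1 n2 = 0 ->
  hrefl n1 (hrefl n2 x) = x - 2%:R *: proj2 n1 n2 x.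
Proof.
move=> h; rewrite refl2E // /proj2; apply/rowP => i; rewrite !mxE; ring.
Qed.

Lemma proj2_orth (n1 n2 x y : vec) : mink y n1 = 0 -> mink y n2 = 0 -> mink (proj2 n1 n2 x) y = 0.
Proof.
by move=> h1 h2; rewrite /proj2 minkDl !minkZl (minkC n1) (minkC n2) h1 h2 !mulr0 addr0.
Qed.

Lemma proj2_res1 (n1 n2 x : vec) : mink n1 n2 = 0 -> mink n1 n1 != 0 ->
  mink (x - proj2 n1 n2 x) n1 = 0.
Proof.
move=> h hn; rewrite /proj2 minkBl minkDl !minkZl (minkC n2 n1) h mulr0 addr0.
by rewrite mulfVK // subrr.
Qed.

Lemma proj2_res2 (n1 n2 x : vec) : mink n1 n2 = 0 -> mink n2 n2 != 0 ->
  mink (x - proj2 n1 n2 x) n2 = 0.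
Proof.
move=> h hn; rewrite /proj2 minkBl minkDl !minkZl h mulr0 add0r.
by rewrite mulfVK // subrr.
Qed.

(* change of orthogonal basis in span(n1, n2) *)
Lemma refl_change (n1 n2 x : vec) (a1 a2 : R) :
  mink n1 n2 = 0 -> 0 < mink n1 n1 -> 0 < mink n2 n2 -> (a1 != 0) || (a2 != 0) ->
  let u := a1 *: n1 + a2 *: n2 in
  let a := (a2 * mink n2 n2) *: n1 - (a1 * mink n1 n1) *: n2 in
  hrefl n1 (hrefl n2 x) = hrefl a (hrefl u x).
Proof.
move=> h N1 N2 nz u a.
have h' : mink n2 n1 = 0 by rewrite minkC.
have ua : mink a u = 0.
  rewrite /a /u !(minkDl, minkBl, minkNl, minkZl, minkDr, minkBr, minkNr, minkZr) ?h ?h'; ring.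
rewrite !refl2E //.
set s1 := mink x n1; set s2 := mink x n2; set M1 := mink n1 n1; set M2 := mink n2 n2.
have uu : mink u u = a1 * a1 * M1 + a2 * a2 * M2.
  rewrite /u !(minkDl, minkDr, minkZl, minkZr) ?h ?h' -/M1 -/M2; ring.
have aa : mink a a = M1 * M2 * (a1 * a1 * M1 + a2 * a2 * M2).
  rewrite /a !(minkDl, minkBl, minkNl, minkZl, minkDr, minkBr, minkNr, minkZr) ?h ?h' -/M1 -/M2; ring.
have xu : mink x u = a1 * s1 + a2 * s2 by rewrite /u !(minkDr, minkZr).
have xa : mink x a = a2 * M2 * s1 - a1 * M1 * s2 by rewrite /a !(minkBr, minkZr).
have D : a1 * a1 * M1 + a2 * a2 * M2 != 0.
  apply/lt0r_neq0.
  have g1 : 0 <= a1 * a1 * M1 by apply: mulr_ge0; [by rewrite -expr2 sqr_ge0 | exact: ltW].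
  have g2 : 0 <= a2 * a2 * M2 by apply: mulr_ge0; [by rewrite -expr2 sqr_ge0 | exact: ltW].
  case/orP: nz => nz.
    have : 0 < a1 * a1 * M1 by rewrite mulr_gt0 // -expr2 exprn_even_gt0.
    lra.
  have : 0 < a2 * a2 * M2 by rewrite mulr_gt0 // -expr2 exprn_even_gt0.
  lra.
have M1n : M1 != 0 by apply/lt0r_neq0.
have M2n : M2 != 0 by apply/lt0r_neq0.
rewrite uu aa xu xa /u /a.
rewrite -!addrA; congr (_ + _); rewrite -!opprD; congr (- _).
rewrite !scalerDr !scalerN !scalerA.
rewrite addrC; apply/rowP => i; rewrite !mxE.
rewrite -/M1 -/M2. field.
by rewrite D M1n M2n.
Qed.


Lemma change_orth (n1 n2 : vec) (a1 a2 : R) : mink n1 n2 = 0 ->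
  mink ((a2 * mink n2 n2) *: n1 - (a1 * mink n1 n1) *: n2) (a1 *: n1 + a2 *: n2) = 0.
Proof.
move=> h; have h' : mink n2 n1 = 0 by rewrite minkC.
rewrite !(minkDl, minkBl, minkNl, minkZl, minkDr, minkBr, minkNr, minkZr) ?h ?h'; ring.
Qed.

Lemma change_pos (n1 n2 : vec) (a1 a2 : R) :
  mink n1 n2 = 0 -> 0 < mink n1 n1 -> 0 < mink n2 n2 -> (a1 != 0) || (a2 != 0) ->
  0 < mink ((a2 * mink n2 n2) *: n1 - (a1 * mink n1 n1) *: n2)
           ((a2 * mink n2 n2) *: n1 - (a1 * mink n1 n1) *: n2).
Proof.
move=> h N1 N2 nz; have h' : mink n2 n1 = 0 by rewrite minkC.
have -> : mink ((a2 * mink n2 n2) *: n1 - (a1 * mink n1 n1) *: n2)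
           ((a2 * mink n2 n2) *: n1 - (a1 * mink n1 n1) *: n2) =
   mink n1 n1 * mink n2 n2 * (a1 * a1 * mink n1 n1 + a2 * a2 * mink n2 n2).
  rewrite !(minkDl, minkBl, minkNl, minkZl, minkDr, minkBr, minkNr, minkZr) ?h ?h'; ring.
move: N1 N2; set M1 := mink n1 n1; set M2 := mink n2 n2 => N1 N2.
apply: mulr_gt0; first exact: mulr_gt0.
have g1 : 0 <= a1 * a1 * M1 by apply: mulr_ge0; [by rewrite -expr2 sqr_ge0 | exact: ltW].
have g2 : 0 <= a2 * a2 * M2 by apply: mulr_ge0; [by rewrite -expr2 sqr_ge0 | exact: ltW].
case/orP: nz => nz.
  have : 0 < a1 * a1 * M1 by rewrite mulr_gt0 // -expr2 exprn_even_gt0.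
  lra.
have : 0 < a2 * a2 * M2 by rewrite mulr_gt0 // -expr2 exprn_even_gt0.
lra.
Qed.

Lemma seteq_refl (A : hset R) : seteq A A.
Proof. by []. Qed.

Lemma hyp_neg (x : vec) : hyp x -> mink x x < 0.
Proof. by case=> -> _; rewrite ltrN10. Qed.

Lemma half_data (P : hset R) (h : vec -> vec) (V : 'M[R]_5) :
  (exists x, hyp x /\ (x <= V)%MS) -> seteq P (fun x => hyp x /\ (x <= V)%MS) ->
  is_half_turn P h ->
  exists n1 n2 : vec, [/\ 0 < mink n1 n1, 0 < mink n2 n2, mink n1 n2 = 0,
     (forall x, (x <= V)%MS <-> (mink x n1 = 0 /\ mink x n2 = 0)) &
     (forall x, h x = hrefl n1 (hrefl n2 x))].
Proof.
move=> [x0 [hx0 x0V]] eP [H1 [H2 [n1 [n2 [[N1 e1] [[N2 e2] [h12 [eI hh]]]]]]]].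
exists n1, n2; split => //.
set W := (perp n1 :&: perp n2)%MS.
have memW : forall x, (x <= W)%MS <-> (mink x n1 = 0 /\ mink x n2 = 0).
  move=> x; rewrite sub_capmx; split.
    by case/andP => /perp1 ? /perp1 ?.
  by case=> a b; apply/andP; split; apply/perp1.
have key : forall x, hyp x -> ((x <= V)%MS <-> (mink x n1 = 0 /\ mink x n2 = 0)).
  move=> x hx; split.
    move=> xV; have : hinter H1 H2 x by apply/eI/eP.
    by case=> /e1 [_ ?] /e2 [_ ?].
  case=> a b; have : hinter H1 H2 x by split; [apply/e1 | apply/e2].
  by move/eI/eP => [].
have VW : (V <= W)%MS.
  apply: hyp_span; first by exists x0.
  by move=> x hx xV; apply/memW/key.
have WV : (W <= V)%MS.
  apply: hyp_span; first by exists x0; split => //; apply/memW/key.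
  by move=> x hx /memW xW; apply/key.
move=> x; split; first by move=> xV; apply/memW; apply: submx_trans VW.
by move/memW => xW; apply: submx_trans WV.
Qed.

Lemma proj_fix (V : 'M[R]_5) (n1 n2 u : vec) :
  (exists x, hyp x /\ (x <= V)%MS) -> mink n1 n2 = 0 -> 0 < mink n1 n1 -> 0 < mink n2 n2 ->
  (forall x, (x <= V)%MS <-> (mink x n1 = 0 /\ mink x n2 = 0)) ->
  (forall y, (y <= V)%MS -> mink u y = 0) -> proj2 n1 n2 u = u.
Proof.
move=> [x0 [hx0 x0V]] h12 N1 N2 VE uV.
set p := u - proj2 n1 n2 u.
have p1 : mink p n1 = 0 by apply: proj2_res1 => //; apply: lt0r_neq0.
have p2 : mink p n2 = 0 by apply: proj2_res2 => //; apply: lt0r_neq0.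
have pV : (p <= V)%MS by apply/VE.
have port : forall y, (y <= V)%MS -> mink p y = 0.
  move=> y yV; have [y1 y2] := (VE y).1 yV.
  by rewrite /p minkBl uV // proj2_orth // subrr.
have := nondeg (hyp_neg hx0) (port _ x0V).
rewrite port // lexx => /(_ isT) /eqP; rewrite subr_eq0 => /eqP.
by [].
Qed.

End Aux.

Theorem lemma6p5 (R : rcfType) (P Q : hset R) (hP hQ : vec R -> vec R) :
  is_plane P -> is_plane Q -> ~ seteq P Q -> is_line (hinter P Q) ->
  is_half_turn P hP -> is_half_turn Q hQ ->
  type_I_elliptic (fun x : vec R => hP (hQ x)) /\
  (exists S : hset R, is_hyperplane S /\ hsubs P S /\ hsubs Q S) /\
  exists T : hset R,
    is_plane T /\ seteq (fixpts (fun x : vec R => hP (hQ x))) T /\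
    hsubs (hinter P Q) T /\
    forall S : hset R, is_hyperplane S -> hsubs P S -> hsubs Q S ->
      plane_orth_hyperplane T S.
Proof.
move=> [VP [rP [[xP [hxP xPV]] eP]]] [VQ [rQ [[xQ [hxQ xQV]] eQ]]] nPQ
  [VL [rL [[xL [hxL xLV]] eL]]] htP htQ.
have [n1 [n2 [N1 N2 h12 VPE hPE]]] := half_data (ex_intro _ xP (conj hxP xPV)) eP htP.
have [m1 [m2 [M1 M2 k12 VQE hQE]]] := half_data (ex_intro _ xQ (conj hxQ xQV)) eQ htQ.
have capE : (VL == VP :&: VQ)%MS.
  apply/andP; split; apply: hyp_span.
  - by exists xL.
  - move=> x hx xV; have [/eP [_ a] /eQ [_ b]] : hinter P Q x by apply/eL.
    by rewrite sub_capmx a b.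
  - exists xL; split => //.
    have [/eP [_ a] /eQ [_ b]] : hinter P Q xL by apply/eL.
    by rewrite sub_capmx a b.
  - move=> x hx; rewrite sub_capmx => /andP [a b].
    have : hinter P Q x by split; [apply/eP | apply/eQ]; split.
    by move/eL => [].
have rcap : \rank (VP :&: VQ) = 2%N by rewrite -(eqmx_rank capE).
have VLP : (VL <= VP)%MS by apply: submx_trans (capmxSl VP VQ); case/andP: capE.
set U := (VP + VQ)%MS.
have rU : \rank U = 4%N.
  have := mxrank_sum_cap VP VQ; rewrite rP rQ rcap => e.
  by apply/eqP; rewrite -(eqn_add2r 2) e.
have rpU : \rank (perp U) = 1%N by rewrite rank_perp rU.
set u := nz_row (perp U).
have u0 : u != 0 by rewrite nz_row_eq0 -mxrank_eq0 rpU.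
have uU : (u <= perp U)%MS := nz_row_sub _.
have pUu : (perp U <= u)%MS by apply: rank_sub_eq uU _; rewrite rpU rank_rV u0.
have uperp : forall y, (y <= U)%MS -> mink u y = 0 := (perpP U u).1 uU.
have VPU : (VP <= U)%MS := addsmxSl _ _.
have VQU : (VQ <= U)%MS := addsmxSr _ _.
have uu : 0 < mink u u.
  rewrite ltNge; apply/negP => h.
  have := nondeg (hyp_neg hxP) (uperp _ (submx_trans xPV VPU)) h.
  by move/eqP; rewrite (negbTE u0).
have uPort : forall y, (y <= VP)%MS -> mink u y = 0.
  by move=> y yV; apply: uperp; apply: submx_trans VPU.
have uQort : forall y, (y <= VQ)%MS -> mink u y = 0.
  by move=> y yV; apply: uperp; apply: submx_trans VQU.
have uP : proj2 n1 n2 u = u.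
  exact: (proj_fix (ex_intro _ xP (conj hxP xPV)) h12 N1 N2 VPE uPort).
have uQ : proj2 m1 m2 u = u.
  exact: (proj_fix (ex_intro _ xQ (conj hxQ xQV)) k12 M1 M2 VQE uQort).
set al1 := mink u n1 / mink n1 n1; set al2 := mink u n2 / mink n2 n2.
set be1 := mink u m1 / mink m1 m1; set be2 := mink u m2 / mink m2 m2.
have uEP : u = al1 *: n1 + al2 *: n2 by rewrite -{1}uP.
have uEQ : u = be1 *: m1 + be2 *: m2 by rewrite -{1}uQ.
have nzal : (al1 != 0) || (al2 != 0).
  rewrite -negb_and; apply/negP => /andP [/eqP a1 /eqP a2]; move: u0.
  by rewrite uEP a1 a2 !scale0r addr0 eqxx.
have nzbe : (be1 != 0) || (be2 != 0).
  rewrite -negb_and; apply/negP => /andP [/eqP a1 /eqP a2]; move: u0.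
  by rewrite uEQ a1 a2 !scale0r addr0 eqxx.
set a := (al2 * mink n2 n2) *: n1 - (al1 * mink n1 n1) *: n2.
set b := (be2 * mink m2 m2) *: m1 - (be1 * mink m1 m1) *: m2.
have aa : 0 < mink a a by apply: change_pos.
have bb : 0 < mink b b by apply: change_pos.
have au : mink a u = 0 by rewrite uEP change_orth.
have bu : mink b u = 0 by rewrite uEQ change_orth.
have hPE' : forall x, hP x = hrefl a (hrefl u x).
  by move=> x; rewrite hPE (refl_change x h12 N1 N2 nzal) -uEP.
have hQE' : forall x, hQ x = hrefl u (hrefl b x).
  by move=> x; rewrite hQE (refl_change x k12 M1 M2 nzbe) -uEQ refl_comm.
have uun : mink u u != 0 by apply: lt0r_neq0.
have comp : forall x, hP (hQ x) = hrefl a (hrefl b x).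
  by move=> x; rewrite hPE' hQE' refl_inv.
have aP : forall y, (y <= VP)%MS -> mink y a = 0.
  move=> y /VPE [y1 y2].
  by rewrite /a minkBr !minkZr y1 y2 !mulr0 subrr.
have bQ : forall y, (y <= VQ)%MS -> mink y b = 0.
  move=> y /VQE [y1 y2].
  by rewrite /b minkBr !minkZr y1 y2 !mulr0 subrr.
have capQ : (VL <= VQ)%MS by apply: submx_trans (capmxSr VP VQ); case/andP: capE.
set VT := (VL + u)%MS.
have T1 : forall x, (x <= VT)%MS -> mink x a = 0 /\ mink x b = 0.
  move=> x /sub_addsmxP [[D1 D2] /= ->].
  rewrite (mx11_scalar D2) mul_scalar_mx !minkDl !minkZl (minkC u a) (minkC u b) au bu !mulr0 !addr0.
  by split; [apply: aP; apply: submx_trans VLP | apply: bQ; apply: submx_trans capQ]; apply: submxMl.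
have T2 : forall x, mink x a = 0 -> mink x b = 0 -> hP (hQ x) = x.
  by move=> x xa xb; rewrite comp !hrefl_orth.
have hPinv : forall y, hP (hP y) = y.
  move=> y; have h21 : mink n2 n1 = 0 by rewrite minkC.
  rewrite !hPE (refl_comm (hrefl n2 y) h21).
  by rewrite !refl_inv // lt0r_neq0.
have capE' : (VP :&: VQ <= VL)%MS by case/andP: capE.
have T3 : forall x, hP (hQ x) = x -> (x <= VT)%MS.
  move=> x hx.
  have e : hQ x = hP x by rewrite -{1}(hPinv (hQ x)) hx.
  move: e; rewrite hPE hQE !refl2_proj // => /addrI /oppr_inj /scalerI e.
  have {}e : proj2 m1 m2 x = proj2 n1 n2 x by apply: e; rewrite pnatr_eq0.
  have vU : (proj2 n1 n2 x <= perp U)%MS.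
    apply/perpP => y /sub_addsmxP [[D1 D2] /= ->].
    rewrite minkDr; have [y1 y2] := (VPE (D1 *m VP)).1 (submxMl _ _).
    have [z1 z2] := (VQE (D2 *m VQ)).1 (submxMl _ _).
    by rewrite proj2_orth // -e proj2_orth // addr0.
  have [k vk] := sub_line (submx_trans vU pUu).
  have xvP : ((x - proj2 n1 n2 x)%R <= VP)%MS.
    by apply/VPE; split; [apply: proj2_res1 | apply: proj2_res2] => //; apply: lt0r_neq0.
  have xvQ : ((x - proj2 n1 n2 x)%R <= VQ)%MS.
    by rewrite -e; apply/VQE; split; [apply: proj2_res1 | apply: proj2_res2] => //; apply: lt0r_neq0.
  have xvL : ((x - proj2 n1 n2 x)%R <= VL)%MS by apply: submx_trans capE'; rewrite sub_capmx xvP xvQ.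
  have -> : x = (x - proj2 n1 n2 x) + k *: u by rewrite -vk subrK.
  by rewrite addmx_sub // ?scalemx_sub ?addsmxSr //; apply: submx_trans (addsmxSl _ _).
have rVT : \rank VT = 3%N.
  rewrite mxrank_disjoint_sum ?rL ?rank_rV ?u0 //.
  apply/eqP; rewrite -submx0; apply/rV_subP => v; rewrite sub_capmx => /andP [vL vu].
  have [k vk] := sub_line vu.
  have : mink v u = 0 by rewrite minkC; apply: uPort; apply: submx_trans VLP.
  rewrite vk minkZl => /eqP; rewrite mulf_eq0 (negbTE uun) orbF => /eqP ->.
  by rewrite scale0r sub0mx.
have xLT : (xL <= VT)%MS by apply: submx_trans xLV (addsmxSl _ _).
have fixE : forall x, hP (hQ x) = x <-> (x <= VT)%MS.
  move=> x; split; first exact: T3.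
  by move=> /T1 [xa xb]; apply: T2.
have a0 : a != 0 by apply/eqP => a0; move: aa; rewrite a0 mink0l ltxx.
split.
  exists (fun x => hyp x /\ mink x a = 0), (fun x => hyp x /\ mink x b = 0), a, b.
  split; first by split.
  split; first by split.
  split.
    move=> hs.
    have pab : (perp a <= perp b)%MS.
      apply: hyp_span.
        by exists xL; split => //; apply/perp1; case: (T1 _ xLT).
      move=> x hx /perp1 xa; apply/perp1.
      by have [] := (hs x).1 (conj hx xa).
    have : (perp a <= VT)%MS.
      apply/rV_subP => v va; apply/fixE; apply: T2; apply/perp1 => //.
      exact: submx_trans pab.
    by move/mxrankS; rewrite rank_perp1 // rVT.
  split; last by move=> x _; apply: comp.
  exists VT; split => //; split; first by exists xL.
  move=> x; split.
    by case=> [[hx xa] [_ xb]]; split => //; apply/fixE; apply: T2.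
  by case=> hx /T1 [xa xb]; split; split.
split.
  exists (fun x => hyp x /\ mink x u = 0); split.
    exists (perp u); split; first exact: rank_perp1.
    split.
      by exists xP; split => //; apply/perp1; rewrite minkC; apply: uPort.
    by move=> x; split; case=> hx h; split => //; apply/perp1.
  split.
    by move=> x /eP [hx xV]; split => //; rewrite minkC; apply: uPort.
  by move=> x /eQ [hx xV]; split => //; rewrite minkC; apply: uQort.
exists (fun x => hyp x /\ (x <= VT)%MS); split.
  by exists VT; split => //; split; first by exists xL.
split.
  by move=> x; split; case=> hx h; split => //; apply/fixE.
split.
  move=> x /eL [hx xV]; split => //; exact: submx_trans xV (addsmxSl _ _).
move=> S [W [rW [[yW [hyW yWW]] eS]]] PS QS.
have VPW : (VP <= W)%MS.
  apply: hyp_span; first by exists xP.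
  by move=> x hx xV; have /eS [] := PS x ((eP x).2 (conj hx xV)).
have VQW : (VQ <= W)%MS.
  apply: hyp_span; first by exists xQ.
  by move=> x hx xV; have /eS [] := QS x ((eQ x).2 (conj hx xV)).
have UW : (U <= W)%MS by rewrite addsmx_sub VPW VQW.
have WU : (W <= U)%MS by apply: rank_sub_eq UW _; rewrite rW rU.
have Uu : (U <= perp u)%MS.
  by apply/rV_subP => v vU; apply/perp1; rewrite minkC; apply: uperp.
have Wu : (W <= perp u)%MS by apply: submx_trans Uu.
have uW : (perp u <= W)%MS by apply: rank_sub_eq Wu _; rewrite rW rank_perp1.
exists VT, u; split => //; split; first by [].
split; last exact: addsmxSr.
split => // x; split.
  by move/eS => [hx xW]; split => //; apply/perp1; apply: submx_trans Wu.
by case=> hx /perp1 xu; apply/eS; split => //; apply: submx_trans uW.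
Qed.
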